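(* Let $n\ge1$, $l>2$ an odd integer, $\varepsilon$ a primitive $l$-th root of unity, $\lambda=(\lambda_i)_{i=1}^n\in\{0,\dots,l-1\}^n$ with $\lambda\neq0$, and $\mathbf a_+,\mathbf a_-\in\mathbb C^\times$. Write $\mathrm{supp}(\lambda)=\{i\mid\lambda_i\ne0\}=\{i_1,\dots,i_m\}$ with $i_1<\dots<i_m$, and $\lambda^{(i)}=\sum_{k=1}^{i-1}\lambda_k-\sum_{k=i+1}^n\lambda_k$. Then $\mathbf a_+=\mathbf a_-\varepsilon^{2(\lambda^{(i)}+i)}$ for all $i\in\mathrm{supp}(\lambda)$ if and only if both of the following hold: (a) for every $2\le r\le m$, $$\lambda_{i_r}\equiv(-1)^{r-1}\lambda_{i_1}+(-1)^r i_1-i_r+2\sum_{k=2}^{r-1}(-1)^{r-1+k}i_k\not\equiv0\pmod l;$$ (b) $\mathbf a_+=\mathbf a_-\varepsilon^{2\sum_{k=1}^m(-1)^{k-1}i_k}$ if $m$ is odd, and $\mathbf a_+=\mathbf a_-\varepsilon^{2(\lambda_{i_1}+\sum_{k=2}^m(-1)^k i_k)}$ if $m$ is even. *)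

(* Defs.v *)
From mathcomp Require Import all_boot all_order all_algebra.
From mathcomp Require Import complex Rstruct.
Set Implicit Arguments.
Unset Strict Implicit.
Unset Printing Implicit Defensive.
Import Order.TTheory GRing.Theory Num.Theory.

Definition Cplx : numClosedFieldType := complex Rdefinitions.R.

(* lam : nat -> nat encodes lambda = (lam 1, ..., lam n), indices 1-based. *)

Definition supp (n : nat) (lam : nat -> nat) : seq nat :=
  [seq i <- iota 1 n | lam i != 0%N].

(* i_k (1-based k) *)
Definition ith (n : nat) (lam : nat -> nat) (k : nat) : nat :=
  nth 0%N (supp n lam) k.-1.

Definition lam_up (n : nat) (lam : nat -> nat) (i : nat) : int :=
  ((\sum_(1 <= k < i) lam k)%N)%:Z - ((\sum_(i.+1 <= k < n.+1) lam k)%N)%:Z.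

Local Open Scope ring_scope.

Definition condA_rhs (n : nat) (lam : nat -> nat) (r : nat) : int :=
  (-1) ^+ r.-1 * (lam (ith n lam 1))%:Z
  + (-1) ^+ r * (ith n lam 1)%:Z
  - (ith n lam r)%:Z
  + 2 * \sum_(2 <= k < r) (-1) ^+ (r.-1 + k) * (ith n lam k)%:Z.

Definition condB_odd_exp (n : nat) (lam : nat -> nat) : int :=
  2 * \sum_(1 <= k < (size (supp n lam)).+1) (-1) ^+ k.-1 * (ith n lam k)%:Z.

Definition condB_even_exp (n : nat) (lam : nat -> nat) : int :=
  2 * ((lam (ith n lam 1))%:Z
       + \sum_(2 <= k < (size (supp n lam)).+1) (-1) ^+ k * (ith n lam k)%:Z).

(* Main.v *)
Require Import Defs.
From mathcomp Require Import all_boot all_order all_algebra.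
From mathcomp Require Import complex Rstruct.
From mathcomp Require Import ring lra zify.
Set Implicit Arguments. Unset Strict Implicit. Unset Printing Implicit Defensive.
Import Order.TTheory GRing.Theory Num.Theory.
Local Open Scope ring_scope.

Section Comb.
Variables (n : nat) (lam : nat -> nat).
Local Notation s := (supp n lam).

Lemma supp_sorted : sorted ltn s.
Proof. exact: (sorted_filter ltn_trans _ (iota_ltn_sorted 1 n)). Qed.

Lemma supp_nth j : (j < size s)%N -> [&& (1 <= nth 0%N s j)%N, (nth 0%N s j <= n)%N & lam (nth 0%N s j) != 0%N].
Proof.
move=> js; have := mem_nth 0%N js; rewrite mem_filter mem_iota => /andP[lz /andP[h1 h2]].
by rewrite lz h1 /=; rewrite add1n ltnS in h2; rewrite h2.
Qed.

Lemma nth_lt j r : (j < size s)%N -> (r < size s)%N ->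
  (nth 0%N s j < nth 0%N s r)%N = (j < r)%N.
Proof.
move=> js rs; case: (ltnP j r) => h.
  exact: (sorted_ltn_nth ltn_trans 0%N supp_sorted).
move: h; rewrite leq_eqVlt => /orP[/eqP->|h]; first by rewrite ltnn.
apply/negbTE; rewrite -leqNgt; apply: ltnW.
exact: (sorted_ltn_nth ltn_trans 0%N supp_sorted).
Qed.

Lemma sum_supp (Q : pred nat) :
  (\sum_(1 <= k < n.+1 | Q k) lam k = \sum_(0 <= j < size s | Q (nth 0%N s j)) lam (nth 0%N s j))%N.
Proof.
rewrite -(big_nth 0%N) big_filter_cond /index_iota subSS subn0.
rewrite big_mkcond [RHS]big_mkcond; apply: eq_bigr => k _.
by case: (lam k =P 0%N) => [->|] /=; case: (Q k).
Qed.

Lemma lam_up_nth r : (r < size s)%N ->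
  lam_up n lam (nth 0%N s r) = \sum_(0 <= j < r) (lam (nth 0%N s j))%:Z
     - \sum_(r.+1 <= j < size s) (lam (nth 0%N s j))%:Z.
Proof.
move=> rs; have /and3P[i1 iN _] := supp_nth rs.
set i := nth 0%N s r.
have HA : (\sum_(1 <= k < i) lam k = \sum_(0 <= j < r) lam (nth 0%N s j))%N.
  rewrite (big_nat_widen _ _ n.+1); last by apply: leqW. rewrite sum_supp (big_nat_widen 0 r (size s)); last by apply: ltnW.
  rewrite big_nat_cond [RHS]big_nat_cond; apply: eq_bigl => j /=.
  by case h: (j < size s)%N => //=; rewrite /i nth_lt.
have HB : (\sum_(i.+1 <= k < n.+1) lam k = \sum_(r.+1 <= j < size s) lam (nth 0%N s j))%N.
  rewrite (big_nat_widenl _ 1) // sum_supp (big_nat_widenl r.+1 0) //.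
  rewrite big_nat_cond [RHS]big_nat_cond; apply: eq_bigl => j /=.
  by case h: (j < size s)%N => //=; rewrite nth_lt.
rewrite /lam_up HA HB.
by rewrite !(big_morph Posz PoszD (erefl 0%:Z)).
Qed.
End Comb.

Lemma expz_eq1 (F : fieldType) (l : nat) (eps : F) (z : int) :
  l.-primitive_root eps -> (eps ^ z == 1) = (l%:Z %| z)%Z.
Proof.
move=> pr; case: z => k.
  by rewrite /dvdz /= -(prim_order_dvd pr).
rewrite NegzE -exprnN invr_eq1 dvdzE abszN /=; exact: (esym (prim_order_dvd pr _)).
Qed.

Lemma eps2 (F : fieldType) (l : nat) (eps : F) (u v : int) :
  (0 < l)%N -> odd l -> l.-primitive_root eps ->
  (eps ^ (2 * u) = eps ^ (2 * v)) <-> (l%:Z %| u - v)%Z.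
Proof.
move=> l0 ol pr.
have e0 : eps != 0.
  apply/negP => /eqP e0; move: (prim_expr_order pr); rewrite e0 expr0n.
  by rewrite eqn0Ngt l0 /= => /eqP; rewrite eq_sym oner_eq0.
have ue : eps \is a GRing.unit by rewrite unitfE.
have -> : (l%:Z %| u - v)%Z = (l%:Z %| 2 * (u - v))%Z.
  rewrite Gauss_dvdzr //; have /eqP h : coprime l 2 by rewrite coprimen2.
  by rewrite /coprimez /gcdz /= h.
rewrite -(expz_eq1 _ pr) mulrBr exprzDr // -invr_expz.
split=> [->|/eqP H]; first by rewrite mulfV ?expfz_neq0.
apply: (mulIf (x := (eps ^ (2 * v))^-1)); first by rewrite invr_eq0 expfz_neq0.
by rewrite H mulfV ?expfz_neq0.
Qed.

Section Alg.
Variables (l m : nat) (x a : nat -> int).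
Local Notation D z := (l%:Z %| z)%Z.

Definition ee r := \sum_(0 <= j < r) a j - \sum_(r.+1 <= j < m) a j + x r.
Definition RR r := a r + a r.-1 + x r - x r.-1.

Lemma ee_diff q : (q.+1 < m)%N -> ee q.+1 - ee q = RR q.+1.
Proof.
move=> qm; rewrite /ee /RR big_nat_recr //= (big_ltn (m := q.+1)) //=; ring.
Qed.

Lemma L2 : (forall r, (r < m)%N -> D (ee r - ee 0)) <->
           (forall r, (1 <= r < m)%N -> D (RR r)).
Proof.
split=> H.
  move=> [|q] // /andP[_ qm].
  rewrite -ee_diff // (_ : ee q.+1 - ee q = (ee q.+1 - ee 0) - (ee q - ee 0)); last ring.
  by rewrite rpredD ?rpredN ?H // ltnW.
elim=> [|q IH] qm; first by rewrite subrr rpred0.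
rewrite (_ : ee q.+1 - ee 0 = (ee q.+1 - ee q) + (ee q - ee 0)); last ring.
by rewrite ee_diff // rpredD ?IH ?H // ltnW.
Qed.

Fixpoint cc r := if r is q.+1 then - cc q - x q.+1 + x q else a 0.

Lemma L3 : (forall r, (1 <= r < m)%N -> D (RR r)) <->
           (forall r, (1 <= r < m)%N -> D (a r - cc r)).
Proof.
split=> H.
  elim=> [|q IH] // /andP[_ qm].
  rewrite (_ : a q.+1 - (- cc q - x q.+1 + x q) = RR q.+1 - (a q - cc q)); last by rewrite /RR /=; ring.
  rewrite rpredD ?rpredN ?H //.
  case: q IH qm => [|q] IH qm; first by rewrite /= subrr rpred0.
  by apply: IH => /=; apply: ltnW.
move=> [|q] // /andP[_ qm].
rewrite (_ : RR q.+1 = (a q.+1 - cc q.+1) + (a q - cc q)); last by rewrite /RR /=; ring.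
rewrite rpredD //; first by apply: H.
case: q qm => [|q] qm; first by rewrite /= subrr rpred0.
by apply: H => /=; apply: ltnW.
Qed.

Definition KK r := (-1)^+r * a 0 + (-1)^+r.+1 * x 0 - x r
   + 2 * \sum_(2 <= k < r.+1) (-1)^+(r + k) * x k.-1.

Lemma L4 q : cc q.+1 = KK q.+1.
Proof.
elim: q => [|q IH]; first by rewrite /KK /= big_geq //=; ring.
rewrite /= -/(cc q.+1) IH /KK (big_nat_recr q.+2 2) //=.
have -> : \sum_(2 <= i < q.+2) (-1) ^+ (q.+2 + i) * x i.-1
   = - \sum_(2 <= i < q.+2) (-1) ^+ (q.+1 + i) * x i.-1.
  by rewrite -sumrN; apply: eq_bigr => k _; rewrite addSn exprS mulN1r mulNr.
have -> : (-1) ^+ (q.+2 + q.+2) = 1 :> int by rewrite addnn -signr_odd odd_double.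
rewrite !exprS; ring.
Qed.

Definition FF p := x 0 - \sum_(1 <= j < p) a j.
Definition Godd p := \sum_(0 <= j < p) (-1)^+j * x j.
Definition Geven p := a 0 + \sum_(1 <= j < p) (-1)^+j.+1 * x j.

Lemma sgn_even q : (-1)^+(q.*2) = 1 :> int.
Proof. by rewrite -signr_odd odd_double. Qed.
Lemma sgn_odd q : (-1)^+(q.*2.+1) = -1 :> int.
Proof. by rewrite -signr_odd /= odd_double. Qed.

Lemma L5 : (forall r, (1 <= r < m)%N -> D (RR r)) -> forall q,
  ((q.*2.+1 <= m)%N -> D (FF q.*2.+1 - Godd q.*2.+1)) /\
  ((q.*2.+2 <= m)%N -> D (FF q.*2.+2 - Geven q.*2.+2)).
Proof.
move=> H; elim=> [|q [IH1 IH2]].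
  split=> hm; rewrite double0.
    by rewrite /FF /Godd big_geq // big_nat1 expr0 mul1r subr0 subrr rpred0.
  rewrite /FF /Geven !big_nat1.
  rewrite (_ : _ - _ = - RR 1); first by rewrite rpredN H.
  by rewrite /RR /=; ring.
split=> hm; rewrite doubleS in hm *.
  rewrite /FF /Godd (big_nat_recr q.*2.+2 1) // (big_nat_recr q.*2.+1 1) //.
  rewrite (big_nat_recr q.*2.+2 0) // (big_nat_recr q.*2.+1 0) //= -/(FF _) -/(Godd _).
  rewrite (_ : _ - _ = (FF q.*2.+1 - Godd q.*2.+1) - RR q.*2.+2).
    rewrite rpredB //; first by apply: IH1; lia.
    by apply: H; lia.
  by rewrite /RR /FF /= sgn_odd -doubleS sgn_even; ring.
rewrite /FF /Geven (big_nat_recr q.*2.+3 1) // (big_nat_recr q.*2.+2 1) //.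
rewrite (big_nat_recr q.*2.+3 1) // (big_nat_recr q.*2.+2 1) //= .
rewrite (_ : _ - _ = (FF q.*2.+2 - Geven q.*2.+2) - RR q.*2.+3).
  rewrite rpredB //; first by apply: IH2; lia.
  by apply: H; lia.
have e3 : (-1)^+ q.*2.+3 = -1 :> int by rewrite -signr_odd /= odd_double.
have e4 : (-1)^+ q.*2.+4 = 1 :> int by rewrite -signr_odd /= odd_double.
by rewrite /RR /FF /Geven /= e3 e4; ring.
Qed.
End Alg.
Lemma L5' (l m : nat) (x a : nat -> int) : (0 < m)%N ->
  (forall r, (1 <= r < m)%N -> (l%:Z %| RR x a r)%Z) ->
  (l%:Z %| FF x a m - (if odd m then Godd x m else Geven x a m))%Z.
Proof.
move=> m0 H; have := odd_double_half m; set q := m./2.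
case: (odd m) => /= e.
  have em : m = q.*2.+1 by rewrite -e add1n.
  have := (L5 H q).1; rewrite -em; exact.
rewrite add0n in e; case: q e => [|q] e; first by rewrite -e in m0.
have em : m = q.*2.+2 by rewrite -e doubleS.
have := (L5 H q).2; rewrite -em; exact.
Qed.

Lemma modE (l : nat) (u v : int) : ((u = v %[mod l%:Z])%Z) <-> (l%:Z %| u - v)%Z.
Proof. by rewrite -eqz_mod_dvd; split => /eqP. Qed.

Theorem proposition4p15 (n l : nat) (eps : Cplx) (lam : nat -> nat)
    (ap am : Cplx) :
  (1 <= n)%N -> (2 < l)%N -> odd l -> l.-primitive_root eps ->
  (forall i, (1 <= i <= n)%N -> (lam i < l)%N) ->
  (exists2 i, (1 <= i <= n)%N & lam i != 0%N) ->
  ap != 0 -> am != 0 ->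
  ((forall i, i \in supp n lam ->
      ap = am * eps ^ (2 * (lam_up n lam i + (i%:Z))))
   <->
   ((forall r, (2 <= r <= size (supp n lam))%N ->
       ((lam (ith n lam r))%:Z = condA_rhs n lam r %[mod (l%:Z)])%Z
       /\ ~~ ((l%:Z) %| condA_rhs n lam r)%Z)
    /\ (if odd (size (supp n lam))
        then ap = am * eps ^ condB_odd_exp n lam
        else ap = am * eps ^ condB_even_exp n lam))).
Proof.
move=> n1 l2 ol pr lamlt [i0 hi0 li0] ap0 am0.
have l0 : (0 < l)%N by apply: leq_trans l2.
set s := supp n lam; set m := size s.
pose x j := (nth 0%N s j)%:Z.
pose a j := (lam (nth 0%N s j))%:Z.
have m0 : (0 < m)%N.
  have : i0 \in s by rewrite mem_filter li0 mem_iota add1n ltnS.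
  by rewrite /m; case: (s).
have ndiv : forall j, (j < m)%N -> ~~ (l%:Z %| a j)%Z.
  move=> j jm; have /and3P[h1 h2 h3] := supp_nth jm.
  have lt : (lam (nth 0%N s j) < l)%N by apply: lamlt; rewrite h1 h2.
  rewrite dvdzE /=; apply/negP => /(dvdn_leq _); rewrite lt0n h3 => /(_ isT).
  by rewrite leqNgt lt.
have Hee : forall r, (r < m)%N -> lam_up n lam (nth 0%N s r) + (nth 0%N s r)%:Z = ee m x a r.
  by move=> r rm; rewrite lam_up_nth.
have condAE : forall q, condA_rhs n lam q.+2 = cc x a q.+1.
  by move=> q; rewrite L4.
have lamE : forall q, (lam (ith n lam q.+2))%:Z = a q.+1 by [].
have BoddE : condB_odd_exp n lam = 2 * Godd x m.
  by rewrite /condB_odd_exp big_add1.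
have BevenE : condB_even_exp n lam = 2 * Geven x a m.
  by rewrite /condB_even_exp big_add1.
have ee0 : ee m x a 0 = FF x a m by rewrite /ee /FF big_geq //; ring.
set G := if odd m then Godd x m else Geven x a m.
have condBE : (if odd m then ap = am * eps ^ condB_odd_exp n lam
               else ap = am * eps ^ condB_even_exp n lam) <-> ap = am * eps ^ (2 * G).
  by rewrite /G BoddE BevenE; case: (odd m).
have condAiff : (forall r, (2 <= r <= m)%N ->
       ((lam (ith n lam r))%:Z = condA_rhs n lam r %[mod (l%:Z)])%Z
       /\ ~~ ((l%:Z) %| condA_rhs n lam r)%Z) <->
       (forall r, (1 <= r < m)%N -> (l%:Z %| RR x a r)%Z).
  rewrite L3; split=> H.
    move=> [|q] // /andP[_ qm].
    have := H q.+2; rewrite condAE lamE modE; case; first by rewrite /=.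
    by move=> ->.
  move=> [|[|q]] // /andP[_ qm].
  rewrite condAE lamE modE; split; first by apply: H.
  apply/negP => hc; have := ndiv _ qm; apply/negP/negPn.
  rewrite (_ : a q.+1 = (a q.+1 - cc x a q.+1) + cc x a q.+1); last ring.
  by rewrite rpredD // H.
rewrite /= -/m condBE condAiff.
split=> [H | [HP HB] i].
  have Hr : forall r, (r < m)%N -> ap = am * eps ^ (2 * ee m x a r).
    move=> r rm; rewrite -Hee //; apply: H; exact: mem_nth.
  have HP : forall r, (1 <= r < m)%N -> (l%:Z %| RR x a r)%Z.
    apply/L2 => r rm; apply/(eps2 _ _ l0 ol pr); apply: (mulfI am0).
    by rewrite -Hr // -Hr.
  split=> //; rewrite (Hr 0%N m0); congr (_ * _); apply/(eps2 _ _ l0 ol pr).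
  by rewrite ee0; apply: L5'.
move/(nthP 0%N) => [r rm <-]; rewrite Hee // HB; congr (_ * _).
apply/(eps2 _ _ l0 ol pr).
have h1 := (proj2 (L2 l m x a) HP r rm).
have h2 := L5' m0 HP; rewrite -/G -ee0 in h2.
rewrite (_ : G - ee m x a r = - ((ee m x a r - ee m x a 0) + (ee m x a 0 - G))); last ring.
by rewrite rpredN rpredD // -rpredN opprB.
Qed.
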